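(* Let $s\ge1$ and let $G=\mathbb{Z}_2*\cdots*\mathbb{Z}_2$ be the free product of $s$ copies of $\mathbb{Z}_2$, with generators $g_1,\dots,g_s$ ($g_i^2=e$). Let $\lambda$ be the left regular representation of $G$ on $\ell_2(G)$, $\lambda(g)|g'\rangle=|gg'\rangle$. For each $i$ let $P_i^{\pm}=(\mathbb{1}\pm\lambda(g_i))/2$ (projectors) and define the channel $$\Omega(\sigma)=\frac1s\sum_{i=1}^s\big(P_i^+\sigma P_i^++P_i^-\sigma P_i^-\big).$$ Then the associated superoperator $\overline{\Omega}=\frac12\big(\frac1s\sum_{i=1}^s\lambda(g_i)\otimes\lambda(g_i)^*+\mathbb{1}\big)$ on $\ell_2(G)\otimes\ell_2(G)$ satisfies $\|\overline{\Omega}\|\le\frac12+\frac1{\sqrt s}$. In particular, if $s\ge5$, then $\mu:=\|\overline{\Omega}\|<1$ and for every density operator $\sigma$ on $\ell_2(G)$ and every $N\in\mathbb{N}$, $\mathrm{tr}\{[\Omega^N(\sigma)]^2\}\le\mu^{2N}\,\mathrm{tr}\{\sigma^2\}\le\mu^{2N}$.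
   Context: Fixing the orthonormal basis $\{|g\rangle:g\in G\}$ of $\ell_2(G)$, a Hilbert–Schmidt operator $\sigma=\sum_{g,h}\sigma_{gh}|g\rangle\langle h|$ is identified with $|\sigma\rangle=\sum\sigma_{gh}|g\rangle|h\rangle\in\ell_2(G)\otimes\ell_2(G)$, and $\overline{\Omega}$ is the operator with $\overline{\Omega}|\sigma\rangle=|\Omega(\sigma)\rangle$; $A^*$ denotes entrywise complex conjugate in this basis. $\|\cdot\|$ is the operator norm. *)

(* Defs.v *)
From HB Require Import structures.
From mathcomp Require Import all_boot all_order all_algebra.
From mathcomp Require Import all_classical all_reals all_analysis.
From mathcomp Require Import complex.

Set Implicit Arguments.
Unset Strict Implicit.
Unset Printing Implicit Defensive.
Import Order.TTheory GRing.Theory Num.Theory.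
Local Open Scope ring_scope.

(* Elements of the free product are represented by their normal forms:
   reduced words in the generators g_0, ..., g_(s-1) (indexed by 'I_s), i.e.
   words with no two consecutive equal letters (since g_i^2 = e).
   The empty word is the identity e, the word [:: i] is the generator g_i.  *)
Definition reduced (s : nat) (w : seq 'I_s) : bool :=
  sorted (fun a b : 'I_s => a != b) w.

Definition FZ2 (s : nat) := {w : seq 'I_s | reduced w}.

Definition gmul_seq (s : nat) (i : 'I_s) (w : seq 'I_s) : seq 'I_s :=
  if w is j :: t then (if j == i then t else i :: w) else [:: i].

Lemma gmul_seq_reduced (s : nat) (i : 'I_s) (w : seq 'I_s) :
  reduced w -> reduced (gmul_seq i w).
Proof.
case: w => [|j t] //= Hw.
case: eqP => [_|/eqP ne]; first exact: (path_sorted Hw).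
by rewrite /reduced /= eq_sym ne.
Qed.

Definition gmul (s : nat) (i : 'I_s) (w : FZ2 s) : FZ2 s :=
  exist _ (gmul_seq i (proj1_sig w)) (gmul_seq_reduced i (proj2_sig w)).

Notation Cx R := (real_closed.complex.complex R).
Definition cnorm (R : realType) (z : Cx R) : R := real_closed.complex.ComplexField.Normc.normc z.

Definition l2norm2 (R : realType) (s : nat) (f : FZ2 s * FZ2 s -> Cx R) : \bar R :=
  \esum_(p in [set: FZ2 s * FZ2 s]) ((cnorm (f p)) ^+ 2)%:E.

Definition l2norm (R : realType) (s : nat) (f : FZ2 s * FZ2 s -> Cx R) : \bar R :=
  match l2norm2 f with
  | EFin r => (Num.sqrt r)%:E
  | _ => +oo%E
  end.

Definition opnorm (R : realType) (s : nat)
  (T : (FZ2 s * FZ2 s -> Cx R) -> (FZ2 s * FZ2 s -> Cx R)) : \bar R :=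
  ereal_sup [set l2norm (T f) | f in [set f | (l2norm2 f <= 1)%E]].

(* (lambda(g_i) (x) lambda(g_i)^* ) f : since lambda(g_i) |g'> = |g_i g'> is a
   real permutation matrix (g_i is an involution), its entrywise conjugate is
   itself and ((lambda(g_i) (x) lambda(g_i)) f)(x,y) = f(g_i x, g_i y). *)
Definition lamlam (R : realType) (s : nat) (i : 'I_s)
  (f : FZ2 s * FZ2 s -> Cx R) : FZ2 s * FZ2 s -> Cx R :=
  fun p => f (gmul i p.1, gmul i p.2).

Definition Omegabar (R : realType) (s : nat)
  (f : FZ2 s * FZ2 s -> Cx R) : FZ2 s * FZ2 s -> Cx R :=
  fun p => 2^-1 * ((s%:R)^-1 * (\sum_(i < s) lamlam i f p) + f p).

(* sigma x y = <x| sigma |y> *)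
Definition lamL (R : realType) (s : nat) (i : 'I_s) (sig : FZ2 s -> FZ2 s -> Cx R) :=
  fun x y => sig (gmul i x) y.          (* lambda(g_i) sigma *)
Definition lamR (R : realType) (s : nat) (i : 'I_s) (sig : FZ2 s -> FZ2 s -> Cx R) :=
  fun x y => sig x (gmul i y).          (* sigma lambda(g_i) *)

Definition PpL (R : realType) (s : nat) (i : 'I_s) (sig : FZ2 s -> FZ2 s -> Cx R) :=
  fun x y => 2^-1 * (sig x y + lamL i sig x y).
Definition PmL (R : realType) (s : nat) (i : 'I_s) (sig : FZ2 s -> FZ2 s -> Cx R) :=
  fun x y => 2^-1 * (sig x y - lamL i sig x y).
Definition PpR (R : realType) (s : nat) (i : 'I_s) (sig : FZ2 s -> FZ2 s -> Cx R) :=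
  fun x y => 2^-1 * (sig x y + lamR i sig x y).
Definition PmR (R : realType) (s : nat) (i : 'I_s) (sig : FZ2 s -> FZ2 s -> Cx R) :=
  fun x y => 2^-1 * (sig x y - lamR i sig x y).

Definition Omega (R : realType) (s : nat) (sig : FZ2 s -> FZ2 s -> Cx R) :
  FZ2 s -> FZ2 s -> Cx R :=
  fun x y => (s%:R)^-1 *
    \sum_(i < s) (PpL i (PpR i sig) x y + PmL i (PmR i sig) x y).

Definition density (R : realType) (s : nat) (sig : FZ2 s -> FZ2 s -> Cx R) : Prop :=
  (forall x y, sig y x = real_closed.complex.conjc (sig x y)) /\
  (forall (F : seq (FZ2 s)) (v : FZ2 s -> Cx R),
     let q := \sum_(x <- F) \sum_(y <- F)
                real_closed.complex.conjc (v x) * sig x y * v y in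
     real_closed.complex.Im q = 0 /\ 0 <= real_closed.complex.Re q) /\
  (\esum_(x in [set: FZ2 s]) (real_closed.complex.Re (sig x x))%:E = 1%E).

(* tr{sigma^2} for a self-adjoint sigma: tr(sigma sigma^dagger)
   = sum_{x,y} |sigma_{xy}|^2 *)
Definition trsq (R : realType) (s : nat) (sig : FZ2 s -> FZ2 s -> Cx R) : \bar R :=
  \esum_(p in [set: FZ2 s * FZ2 s]) ((cnorm (sig p.1 p.2)) ^+ 2)%:E.

(* Main.v *)
Require Import Defs.
From HB Require Import structures.
From mathcomp Require Import all_boot all_order all_algebra.
From mathcomp Require Import all_classical all_reals all_analysis.
From mathcomp Require Import complex.
From mathcomp Require Import ring lra.
Import Order.TTheory GRing.Theory Num.Theory.
Local Open Scope ring_scope.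
Section A.
Local Open Scope ereal_scope.
Lemma esumZ_le (R : realType) (T : choiceType) (I : set T) (k : R) (a : T -> \bar R) :
  (0 <= k)%R -> (forall i, 0 <= a i) ->
  \esum_(i in I) (k%:E * a i) <= k%:E * \esum_(i in I) a i.
Proof.
move=> k0 a0; apply: ge_ereal_sup => _ [X XI <-].
rewrite -ge0_mule_fsumr //; apply: lee_wpmul2l; first by rewrite lee_fin.
by apply: ereal_sup_ubound; exists X.
Qed.
End A.
Lemma gmul_seqK (s : nat) (i : 'I_s) (w : seq 'I_s) :
  reduced w -> gmul_seq i (gmul_seq i w) = w.
Proof.
case: w => [|j t] /=; first by rewrite eqxx.
case: (eqVneq j i) => [->|ne] /=; last by rewrite eqxx.
case: t => [|k t] /=; first by [].
rewrite /reduced /= => /andP [ik _].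
by rewrite eq_sym (negbTE ik).
Qed.

Lemma gmulK (s : nat) (i : 'I_s) : involutive (@gmul s i).
Proof.
move=> [w hw]; apply: val_inj => /=; exact: gmul_seqK.
Qed.

Definition Ph {s : nat} (i : 'I_s) (w : FZ2 s) : bool := ohead (val w) == Some i.

Lemma Ph_gmul (s : nat) (i : 'I_s) (w : FZ2 s) : Ph i (gmul i w) = ~~ Ph i w.
Proof.
case: w => [[|j t] hw]; rewrite /Ph /=; first by rewrite eqxx.
case: (eqVneq j i) => [ji|ne] /=.
  2:{ rewrite eqxx; apply/esym/negP => /eqP [ji]; by rewrite ji eqxx in ne. }
subst j; case: t hw => [|k t] /=; first by rewrite eqxx.
move=> /andP [ik _]; rewrite eqxx; apply/negP => /eqP [ki]; by rewrite ki eqxx in ik.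
Qed.

Definition gg {s : nat} (i : 'I_s) (p : FZ2 s * FZ2 s) := (gmul i p.1, gmul i p.2).

Lemma ggK (s : nat) (i : 'I_s) : involutive (@gg s i).
Proof. by move=> [x y]; rewrite /gg /= !gmulK. Qed.

Lemma Ph_sum (R : realType) (s : nat) (w : FZ2 s) (F : 'I_s -> R) :
  (forall i, 0 <= F i) ->
  \sum_(i < s | Ph i w) F i = if ohead (val w) is Some h then F h else 0.
Proof.
move=> F0; rewrite /Ph; case: (ohead (val w)) => [h|].
  rewrite (big_pred1 h) // => i /=; apply/eqP/eqP => [[->]|->] //.
by rewrite big_pred0.
Qed.
Lemma cs_ord (R : realFieldType) (n : nat) (F : 'I_n -> R) :
  (\sum_(i < n) F i) ^+ 2 <= n%:R * \sum_(i < n) F i ^+ 2.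
Proof.
elim: n F => [|n IH] F; first by rewrite !big_ord0 expr0n /= mul0r.
rewrite !big_ord_recr /=.
set S := \sum_(i < n) F (widen_ord (leqnSn n) i).
set Q := \sum_(i < n) F (widen_ord (leqnSn n) i) ^+ 2.
have HQ : 0 <= Q by apply: sumr_ge0 => i _; exact: sqr_ge0.
have H := IH (fun i => F (widen_ord (leqnSn n) i)); rewrite -/S -/Q in H.
set a := F ord_max.
rewrite -natr1.
have m0 : 0 <= n%:R :> R by exact: ler0n.
set m := n%:R : R in H m0 *.
have [mz|mpos] := eqVneq m 0.
  rewrite mz mul0r in H.
  have -> : S = 0 by apply/eqP; rewrite -sqrf_eq0 eq_le sqr_ge0 andbT.
  by rewrite mz; lra.
have Hn : 0 < m by rewrite lt_def mpos m0.
have : 0 <= (S - m * a) ^+ 2 by exact: sqr_ge0.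
move=> h; nra.
Qed.

Lemma three_cs (R : realFieldType) (r x y z : R) : 0 < r ->
  r * (x + y + z) ^+ 2 <= (r + 2) * (x ^+ 2 + r * y ^+ 2 + r * z ^+ 2).
Proof.
move=> r0.
have h1 : 0 <= (x - r * y) ^+ 2 by exact: sqr_ge0.
have h2 : 0 <= (x - r * z) ^+ 2 by exact: sqr_ge0.
have h3 : 0 <= r * (y - z) ^+ 2 by apply: mulr_ge0; [lra| exact: sqr_ge0].
nra.
Qed.

Lemma cnorm_ge0 (R : realType) (z : Cx R) : 0 <= cnorm z.
Proof. by case: z => a b; rewrite /cnorm /=; exact: sqrtr_ge0. Qed.
Lemma cnormD (R : realType) (a b : Cx R) : cnorm (a + b) <= cnorm a + cnorm b.
Proof. exact: le_normcD. Qed.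
Lemma cnormM (R : realType) (a b : Cx R) : cnorm (a * b) = cnorm a * cnorm b.
Proof. exact: real_closed.complex.ComplexField.Normc.normcM. Qed.
Lemma cnorm_nat (R : realType) (n : nat) : cnorm (n%:R : Cx R) = n%:R.
Proof. by rewrite /cnorm -[n%:R]/(1 *+ n) (normcMn (1 : Cx R) n) real_closed.complex.ComplexField.Normc.normc1. Qed.
Lemma cnormV (R : realType) (a : Cx R) : cnorm (a^-1) = (cnorm a)^-1.
Proof. exact: real_closed.complex.ComplexField.Normc.normcV. Qed.
Lemma cnorm_sum (R : realType) (I : Type) (r : seq I) (P : pred I) (F : I -> Cx R) :
  cnorm (\sum_(i <- r | P i) F i) <= \sum_(i <- r | P i) cnorm (F i).
Proof.
elim: r => [|x r IH]; first by rewrite !big_nil /cnorm real_closed.complex.ComplexField.Normc.normc0.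
rewrite !big_cons; case: (P x) => //.
by rewrite (le_trans (cnormD _ _ _)) // lerD2l.
Qed.
Lemma cnorm_sq (R : realType) (z : Cx R) :
  cnorm z ^+ 2 = real_closed.complex.Re z ^+ 2 + real_closed.complex.Im z ^+ 2.
Proof. by case: z => a b; rewrite /cnorm /= sqr_sqrtr // addr_ge0 // sqr_ge0. Qed.
Lemma final_real (R : realFieldType) (s r x U V A B : R) :
  0 < r -> s = r ^+ 2 -> 0 <= x -> 0 <= U -> 0 <= V ->
  U ^+ 2 <= A -> V ^+ 2 <= s * B ->
  (2^-1 * (x + s^-1 * (U + V))) ^+ 2 <=
  (2^-1 + r^-1) / 2 * x ^+ 2 + (2^-1 + r^-1) / (2 * s * r) * A
  + (2^-1 + r^-1) / (2 * r) * B.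
Proof.
move=> r0 sr x0 U0 V0 hA hB.
have s0 : 0 < s by rewrite sr exprn_gt0.
have c0 : 0 <= 2^-1 + r^-1 by apply: addr_ge0; rewrite invr_ge0 ?ltW //; lra.
have H := @three_cs R r x (s^-1 * U) (s^-1 * V) r0.
have e1 : (2^-1 * (x + s^-1 * (U + V))) ^+ 2 = r^-1 / 4 * (r * (x + s^-1 * U + s^-1 * V) ^+ 2).
  by field; rewrite ?(gt_eqF s0, gt_eqF r0, sqrf_eq0).
have e2 : (2^-1 + r^-1) / 2 * x ^+ 2 + (2^-1 + r^-1) / (2 * s * r) * U ^+ 2
  + (2^-1 + r^-1) / (2 * r) * (s^-1 * V ^+ 2) = r^-1 / 4 * ((r + 2) * (x ^+ 2 + r * (s^-1 * U) ^+ 2 + r * (s^-1 * V) ^+ 2)).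
  by rewrite sr; field; rewrite ?(gt_eqF s0, gt_eqF r0, sqrf_eq0, expf_eq0).
rewrite e1; apply: le_trans (_ : r^-1 / 4 * ((r + 2) * (x ^+ 2 + r * (s^-1 * U) ^+ 2 + r * (s^-1 * V) ^+ 2)) <= _).
  by apply: ler_wpM2l => //; apply: mulr_ge0; [rewrite invr_ge0 ltW | lra].
rewrite -e2; apply: lerD; first apply: lerD => //.
- by apply: ler_wpM2l => //; apply: divr_ge0 => //; apply: mulr_ge0; [apply: mulr_ge0|]; lra.
- apply: ler_wpM2l; first by apply: divr_ge0 => //; lra.
  by rewrite ler_pdivrMl // .
Qed.
Definition nf {R : realType} {s : nat} (f : FZ2 s * FZ2 s -> Cx R) p := cnorm (f p) ^+ 2.

Lemma cnorm_inv2 (R : realType) : cnorm (2^-1 : Cx R) = 2^-1.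
Proof. by rewrite cnormV (cnorm_nat R 2). Qed.

Lemma pointwise (R : realType) (s : nat) (f : FZ2 s * FZ2 s -> Cx R) p :
  (0 < s)%N -> forall r : R, r = Num.sqrt (s%:R : R) ->
  nf (Omegabar f) p <= (2^-1 + r^-1) / 2 * nf f p
    + (2^-1 + r^-1) / (2 * s%:R * r) * \sum_(i < s | Ph i p.1) nf f (gg i p)
    + (2^-1 + r^-1) / (2 * r) * \sum_(i < s | ~~ Ph i p.1) nf f (gg i p).
Proof.
move=> s0 r hr.
have r0 : 0 < r by rewrite hr sqrtr_gt0 ltr0n.
have sr : s%:R = r ^+ 2 by rewrite hr sqr_sqrtr // ler0n.
set x := cnorm (f p).
set U := \sum_(i < s | Ph i p.1) cnorm (f (gg i p)).
set V := \sum_(i < s | ~~ Ph i p.1) cnorm (f (gg i p)).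
have x0 : 0 <= x by exact: cnorm_ge0.
have U0 : 0 <= U by apply: sumr_ge0 => i _; exact: cnorm_ge0.
have V0 : 0 <= V by apply: sumr_ge0 => i _; exact: cnorm_ge0.
have hA : U ^+ 2 <= \sum_(i < s | Ph i p.1) nf f (gg i p).
  rewrite /U /nf (Ph_sum _ _ p.1 (fun i => cnorm (f (gg i p)))); last by move=> i; exact: cnorm_ge0.
  rewrite (Ph_sum _ _ p.1 (fun i => cnorm (f (gg i p)) ^+ 2)); last by move=> i; exact: sqr_ge0.
  by case: (ohead _) => //; rewrite expr0n.
have hB : V ^+ 2 <= s%:R * \sum_(i < s | ~~ Ph i p.1) nf f (gg i p).
  rewrite /V /nf big_mkcond /= [X in _ <= _ * X]big_mkcond /=.
  apply: le_trans (cs_ord _ _ _) _; apply: ler_wpM2l; first exact: ler0n.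
  by apply: ler_sum => i _; case: ifP => _; rewrite ?expr0n.
have key : cnorm (Omegabar f p) <= 2^-1 * (x + (s%:R)^-1 * (U + V)).
  rewrite /Omegabar cnormM cnorm_inv2; apply: ler_wpM2l; first by rewrite invr_ge0; lra.
  apply: le_trans (cnormD R _ _) _; rewrite addrC lerD2l cnormM cnormV cnorm_nat.
  apply: ler_wpM2l; first by rewrite invr_ge0 ler0n.
  apply: le_trans (cnorm_sum R _ _ _ _) _.
  by rewrite (bigID (fun i => Ph i p.1)) /=.
have H := @final_real R _ r _ _ _ _ _ r0 sr x0 U0 V0 hA hB.
apply: le_trans H.
rewrite /nf; apply: lerXn2r; rewrite ?nnegrE //; first exact: cnorm_ge0.
apply: mulr_ge0; first by rewrite invr_ge0; lra.
by apply: addr_ge0 => //; apply: mulr_ge0 => //; apply: addr_ge0.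
Qed.
Section Esum.
Local Open Scope ereal_scope.

Lemma reindex_gg (R : realType) (s : nat) (i : 'I_s) (a : FZ2 s * FZ2 s -> \bar R) :
  \esum_(p in [set: FZ2 s * FZ2 s]) a p = \esum_(p in [set: FZ2 s * FZ2 s]) a (gg i p).
Proof.
apply: reindex_esum; rewrite setTT_bijective; exact: (inv_bij (ggK _ i)).
Qed.

Lemma partA (R : realType) (s : nat) (f : FZ2 s * FZ2 s -> Cx R) :
  \esum_(p in [set: FZ2 s * FZ2 s]) (\sum_(i < s | Ph i p.1) nf f (gg i p))%:E
  <= l2norm2 f *+ s.
Proof.
under eq_esum do rewrite big_mkcond -sumEFin.
rewrite esum_sum; last by move=> p i _ _; case: ifP => _; rewrite lee_fin ?sqr_ge0.
rewrite -[X in _ <= X *+ _]/(\esum_(p in [set: FZ2 s * FZ2 s]) (nf f p)%:E).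
have -> : (\esum_(p in [set: FZ2 s * FZ2 s]) (nf f p)%:E) *+ s =
   \sum_(i < s) \esum_(p in [set: FZ2 s * FZ2 s]) (nf f p)%:E.
  by rewrite sumr_const card_ord.
apply: lee_sum => i _.
rewrite [X in _ <= X](reindex_gg _ _ i).
apply: le_esum => p _; case: ifP => _; rewrite lee_fin ?sqr_ge0 //.
Qed.

Lemma partB (R : realType) (s : nat) (f : FZ2 s * FZ2 s -> Cx R) :
  \esum_(p in [set: FZ2 s * FZ2 s]) (\sum_(i < s | ~~ Ph i p.1) nf f (gg i p))%:E
  <= l2norm2 f.
Proof.
under eq_esum do rewrite big_mkcond -sumEFin.
rewrite esum_sum; last by move=> p i _ _; case: ifP => _; rewrite lee_fin ?sqr_ge0.
have -> : \sum_(i < s) \esum_(p in [set: FZ2 s * FZ2 s])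
    (if ~~ Ph i p.1 then nf f (gg i p) else 0%R)%:E =
  \sum_(i < s) \esum_(p in [set: FZ2 s * FZ2 s]) (if Ph i p.1 then nf f p else 0%R)%:E.
  apply: eq_bigr => i _; rewrite (reindex_gg _ _ i); apply: eq_esum => p _.
  by rewrite ggK /gg /= Ph_gmul negbK.
rewrite -esum_sum; last by move=> p i _ _; case: ifP => _; rewrite lee_fin ?sqr_ge0.
apply: le_esum => p _; rewrite sumEFin lee_fin -big_mkcond /=.
rewrite (Ph_sum _ _ p.1 (fun _ => nf f p)); last by move=> _; exact: sqr_ge0.
by case: (ohead _) => //; exact: sqr_ge0.
Qed.
End Esum.
Section Key.
Local Open Scope ereal_scope.
Lemma key_esum (R : realType) (s : nat) (f : FZ2 s * FZ2 s -> Cx R) (r : R) :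
  (0 < s)%N -> r = Num.sqrt (s%:R : R) ->
  l2norm2 (Omegabar f) <= (((2^-1 + r^-1) ^+ 2)%R)%:E * l2norm2 f.
Proof.
move=> s0 hr.
have r0 : (0 < r)%R by rewrite hr sqrtr_gt0 ltr0n.
have sr : (s%:R = r ^+ 2)%R by rewrite hr sqr_sqrtr // ler0n.
set c := (2^-1 + r^-1)%R.
have c0 : (0 < c)%R by rewrite /c; apply: addr_gt0; rewrite invr_gt0 //; lra.
have sp : (0 < s%:R :> R)%R by rewrite ltr0n.
set k0 := (c / 2)%R. set k1 := (c / (2 * s%:R * r))%R. set k2 := (c / (2 * r))%R.
have k00 : (0 <= k0)%R by rewrite /k0; apply: divr_ge0; lra.
have k10 : (0 <= k1)%R by rewrite /k1; apply: divr_ge0; [lra|]; apply: mulr_ge0; [apply: mulr_ge0|]; lra.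
have k20 : (0 <= k2)%R by rewrite /k2; apply: divr_ge0; [lra|]; apply: mulr_ge0; lra.
set A := fun p : FZ2 s * FZ2 s => (\sum_(i < s | Ph i p.1) nf f (gg i p))%R.
set B := fun p : FZ2 s * FZ2 s => (\sum_(i < s | ~~ Ph i p.1) nf f (gg i p))%R.
have A0 : forall p, (0 <= A p)%R by move=> p; apply: sumr_ge0 => i _; exact: sqr_ge0.
have B0 : forall p, (0 <= B p)%R by move=> p; apply: sumr_ge0 => i _; exact: sqr_ge0.
have nf0 : forall p, (0 <= nf f p)%R by move=> p; exact: sqr_ge0.
have step1 : l2norm2 (Omegabar f) <=
   \esum_(p in [set: FZ2 s * FZ2 s]) ((k0%:E * (nf f p)%:E + k1%:E * (A p)%:E) + k2%:E * (B p)%:E).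
  apply: le_esum => p _; rewrite -!EFinM -!EFinD lee_fin.
  exact: (pointwise R s f p s0 r hr).
have pos : forall (k : R) h, (0 <= k)%R -> (forall p, 0 <= h p)%R -> forall p : FZ2 s * FZ2 s, 0 <= k%:E * (h p)%:E.
  by move=> k h k0' h0 p; rewrite -EFinM lee_fin mulr_ge0.
rewrite esumD in step1; last 2 first.
- by move=> p _; apply: adde_ge0; apply: pos.
- by move=> p _; apply: pos.
rewrite esumD in step1; last 2 first.
- by move=> p _; apply: pos.
- by move=> p _; apply: pos.
apply: (le_trans step1).
have hA := partA R s f. have hB := partB R s f.
have e0 := @esumZ_le R _ [set: FZ2 s * FZ2 s] k0 (fun p => (nf f p)%:E) k00 (fun p => nf0 p).
have e1 := @esumZ_le R _ [set: FZ2 s * FZ2 s] k1 (fun p => (A p)%:E) k10 (fun p => A0 p).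
have e2 := @esumZ_le R _ [set: FZ2 s * FZ2 s] k2 (fun p => (B p)%:E) k20 (fun p => B0 p).
rewrite -/(l2norm2 f) in e0.
have N0 : 0 <= l2norm2 f by apply: esum_ge0 => p _; exact: nf0.
move: hA hB e0 e1 e2 N0; case: (l2norm2 f) => [n| |] hA hB e0 e1 e2 N0 //.
  apply: (le_trans (leeD (leeD e0 (le_trans e1 (lee_wpmul2l _ hA))) (le_trans e2 (lee_wpmul2l _ hB)))); rewrite ?lee_fin //.
  rewrite -EFin_natmul -!EFinM -!EFinD lee_fin.
  rewrite -mulr_natr.
  have -> : (k0 * n + k1 * (n * s%:R) + k2 * n = c ^+ 2 * n)%R.
    rewrite /k0 /k1 /k2 /c sr; field; rewrite ?(gt_eqF r0) //.
  by [].
rewrite mulry gtr0_sg ?exprn_gt0 // mul1e leey //.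
Qed.
End Key.
Import real_closed.complex.
Local Open Scope complex_scope.
Lemma conjz_z (R : realType) (z : Cx R) : conjc z * z = (Re z ^+ 2 + Im z ^+ 2)%:C.
Proof.
case: z => a b /=. apply/eqP; rewrite eq_complex /= !expr2; apply/andP; split; apply/eqP; ring.
Qed.
Lemma test (R : realType) (z : Cx R) (dx dy be w: R) :
  conjc z * z = w%:C ->
  Re ((- conjc z) * dx%:C * (-z) + (- conjc z) * z * be%:C + be%:C * conjc z * (- z) + be%:C * dy%:C * be%:C)
  = (dx * w - 2 * be * w + be ^+ 2 * dy)%R.
Proof.
move=> h.
have -> : (- conjc z) * dx%:C * (-z) + (- conjc z) * z * be%:C + be%:C * conjc z * (- z) + be%:C * dy%:C * be%:C
  = dx%:C * (conjc z * z) - (be%:C + be%:C) * (conjc z * z) + be%:C * be%:C * dy%:C by ring.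
rewrite h.
have -> : dx%:C * w%:C - (be%:C + be%:C) * w%:C + be%:C * be%:C * dy%:C
  = (dx * w - (be + be) * w + be * be * dy)%:C :> Cx R.
  by rewrite rmorphD rmorphB !rmorphM rmorphD.
rewrite /=; ring.
Qed.

Lemma conjcN (R : realType) (z : Cx R) : conjc (- z) = - conjc z.
Proof. by case: z. Qed.

Lemma quad_real (R : realType) (dx dy w : R) : (0 <= dx -> 0 <= dy -> 0 <= w ->
  (forall be, 0 <= dx * w - 2 * be * w + be ^+ 2 * dy) -> w <= dx * dy)%R.
Proof.
move=> dx0 dy0 w0 h.
have [dyz|dyp] := eqVneq dy 0.
  have := h (dx + 1); rewrite dyz; nra.
have dyg : (0 < dy)%R by rewrite lt_def dyp dy0.
have := h (w / dy).
have -> : (dx * w - 2 * (w / dy) * w + (w / dy) ^+ 2 * dy = (w * (dx * dy - w)) / dy)%R.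
  by field.
rewrite pmulr_lge0 ?invr_gt0 // => H.
have [wz|wp] := eqVneq w 0; first by rewrite wz; nra.
have wg : (0 < w)%R by rewrite lt_def wp w0.
nra.
Qed.

Lemma dens_diag (R : realType) (s : nat) (sig : FZ2 s -> FZ2 s -> Cx R) : density sig ->
  forall x, sig x x = (Re (sig x x))%:C /\ (0 <= Re (sig x x))%R.
Proof.
case=> [sa [psd _]] x; split.
  have := sa x x; case: (sig x x) => a b /= [hb].
  by rewrite /real_complex_def; congr Complex; lra.
have [_] := psd [:: x] (fun _ => 1).
by rewrite !big_cons !big_nil !addr0 conjc1 mul1r mulr1.
Qed.

Lemma dens_off (R : realType) (s : nat) (sig : FZ2 s -> FZ2 s -> Cx R) : density sig ->
  forall x y, (cnorm (sig x y) ^+ 2 <= Re (sig x x) * Re (sig y y))%R.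
Proof.
move=> D x y.
have [ex ux] := dens_diag _ _ _ D x. have [ey uy] := dens_diag _ _ _ D y.
case: D => [sa [psd _]].
have [<-|nxy] := eqVneq x y.
  rewrite cnorm_sq ex /= expr0n /= addr0 expr2 //.
set z := sig x y.
have hw := conjz_z R z.
apply: quad_real => //; first by rewrite cnorm_sq addr_ge0 // sqr_ge0.
move=> be.
have [_] := psd [:: x; y] (fun u => if u == x then - z else be%:C).
have nyx : (y == x) = false by rewrite eq_sym; exact: negbTE.
rewrite !big_cons !big_nil !addr0 eqxx nyx.
rewrite (sa x y) -/z ex ey conjcN conjc_real !addrA.
rewrite (test R z _ _ _ _ hw) cnorm_sq.
by [].
Qed.
Lemma trsq_le1 (R : realType) (s : nat) (sig : FZ2 s -> FZ2 s -> Cx R) : density sig ->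
  (trsq sig <= 1)%E.
Proof.
move=> D.
have dg x := (dens_diag _ _ _ D x).2.
have off := dens_off _ _ _ D.
have [_ [_ tr]] := D.
set d := fun x => Re (sig x x).
apply: (@le_trans _ _ (\esum_(p in [set: FZ2 s * FZ2 s]) (d p.1 * d p.2)%:E)%E).
  by apply: le_esum => p _; rewrite lee_fin; exact: off.
have -> : (setT : set (FZ2 s * FZ2 s)) = setXR (setT : set (FZ2 s)) (fun _ => setT).
  by apply/seteqP; split => p.
rewrite -(@esum_esum R _ _ setT (fun _ => setT) (fun i j => (d i * d j)%:E)); last by move=> i j _ _; rewrite lee_fin; exact: mulr_ge0 (dg i) (dg j).
apply: (@le_trans _ _ (\esum_(i in [set: FZ2 s]) ((d i)%:E * \esum_(j in [set: FZ2 s]) (d j)%:E))%E).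
  apply: le_esum => i _; under eq_esum do rewrite EFinM.
  by apply: esumZ_le => [|j]; rewrite ?lee_fin; [exact: dg | exact: dg].
by rewrite tr; under eq_esum do rewrite mule1; rewrite tr.
Qed.
Arguments key_esum {R s}.
Section Fin.
Local Open Scope ereal_scope.

Lemma l2norm2_ge0 (R : realType) (s : nat) (g : FZ2 s * FZ2 s -> Cx R) : 0 <= l2norm2 g.
Proof. by apply: esum_ge0 => p _; rewrite lee_fin sqr_ge0. Qed.
Arguments l2norm2_ge0 {R s}.

Lemma l2norm_ge0 (R : realType) (s : nat) (g : FZ2 s * FZ2 s -> Cx R) : 0 <= l2norm g.
Proof. by rewrite /l2norm; case: (l2norm2 g) => // r; rewrite lee_fin sqrtr_ge0. Qed.

Lemma l2norm_le (R : realType) (s : nat) (g : FZ2 s * FZ2 s -> Cx R) (c : R) :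
  (0 <= c)%R -> l2norm2 g <= (c ^+ 2)%:E -> l2norm g <= c%:E.
Proof.
move=> c0; have := l2norm2_ge0 g; rewrite /l2norm; case: (l2norm2 g) => // r r0.
rewrite !lee_fin => h; rewrite -(ger0_norm c0) -sqrtr_sqr ler_sqrt //; exact: sqr_ge0.
Qed.

Lemma l2norm_sq (R : realType) (s : nat) (g : FZ2 s * FZ2 s -> Cx R) (m : R) :
  (0 <= m)%R -> l2norm g <= m%:E -> l2norm2 g <= (m ^+ 2)%:E.
Proof.
move=> m0; have := l2norm2_ge0 g; rewrite /l2norm; case: (l2norm2 g) => // r r0.
rewrite !lee_fin => h; rewrite lee_fin in r0.
by rewrite -(sqr_sqrtr r0) lerXn2r // nnegrE sqrtr_ge0.
Qed.

Lemma opnorm_le (R : realType) (s : nat) : (0 < s)%N ->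
  opnorm (@Omegabar R s) <= (2^-1 + (Num.sqrt (s%:R : R))^-1)%:E.
Proof.
move=> s0; set r := Num.sqrt (s%:R : R).
have r0 : (0 < r)%R by rewrite sqrtr_gt0 ltr0n.
have c0 : (0 <= 2^-1 + r^-1)%R by apply: addr_ge0; rewrite invr_ge0 ?ltW //; lra.
apply: ge_ereal_sup => _ [f hf <-]; apply: l2norm_le => //.
apply: (le_trans (key_esum f r s0 (erefl r))).
by rewrite -[X in _ <= X]mule1 lee_wpmul2l // lee_fin sqr_ge0.
Qed.
End Fin.
Local Open Scope complex_scope.
Lemma Omegabar_scale (R : realType) (s : nat) (k : Cx R) (f : FZ2 s * FZ2 s -> Cx R) p :
  Omegabar (fun q => k * f q) p = k * Omegabar f p.
Proof.
rewrite /Omegabar /lamlam /=.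
rewrite -(mulr_sumr (index_enum 'I_s) xpredT (fun i => f (gmul i p.1, gmul i p.2)) k).
ring.
Qed.

Lemma cnorm_real (R : realType) (a : R) : (0 <= a)%R -> cnorm (a%:C : Cx R) = a.
Proof.
move=> a0; rewrite /cnorm /= expr0n /= addr0 sqrtr_sqr ger0_norm //.
Qed.

Section Hom.
Local Open Scope ereal_scope.
Lemma homog (R : realType) (s : nat) (m t : R) (f : FZ2 s * FZ2 s -> Cx R) :
  (0 < s)%N -> (0 <= m)%R -> opnorm (@Omegabar R s) = m%:E -> l2norm2 f = t%:E ->
  l2norm2 (Omegabar f) <= (m ^+ 2 * t)%:E.
Proof.
move=> s0 m0 hmu ht.
have t0 : (0 <= t)%R by rewrite -lee_fin -ht l2norm2_ge0.
have [tz|tp] := eqVneq t 0%R.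
  apply: (le_trans (key_esum f _ s0 (erefl _))).
  by rewrite ht tz mule0 mulr0.
have tg : (0 < t)%R by rewrite lt_def tp t0.
set a := ((Num.sqrt t)^-1)%R.
have a0 : (0 < a)%R by rewrite invr_gt0 sqrtr_gt0.
have a2 : (a ^+ 2 = t^-1)%R by rewrite exprVn sqr_sqrtr // ltW.
set g := fun q => (a%:C * f q)%R.
have ng : forall q, (cnorm (g q) ^+ 2 = a ^+ 2 * cnorm (f q) ^+ 2)%R.
  by move=> q; rewrite /g cnormM cnorm_real ?ltW // exprMn.
have hg : l2norm2 g <= 1.
  rewrite /l2norm2; under eq_esum do rewrite ng EFinM.
  apply: (le_trans (@esumZ_le R _ _ (a ^+ 2) (fun q => (cnorm (f q) ^+ 2)%:E) (sqr_ge0 _) (fun q => sqr_ge0 _))).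
  by rewrite -/(l2norm2 f) ht -EFinM a2 mulVf.
have hOg : l2norm (Omegabar g) <= m%:E.
  by rewrite -hmu; apply: ereal_sup_ubound; exists g.
have hOg2 := l2norm_sq _ _ _ _ m0 hOg.
have eO : forall q, (cnorm (Omegabar f q) ^+ 2 = t * cnorm (Omegabar g q) ^+ 2)%R.
  move=> q; rewrite /g Omegabar_scale cnormM cnorm_real ?ltW // exprMn a2 mulrA mulfV ?mul1r //.
rewrite /l2norm2; under eq_esum do rewrite eO EFinM.
apply: (le_trans (@esumZ_le R _ _ t (fun q => (cnorm (Omegabar g q) ^+ 2)%:E) t0 (fun q => sqr_ge0 _))).
by rewrite -/(l2norm2 (Omegabar g)) mulrC EFinM lee_wpmul2l // lee_fin.
Qed.
End Hom.
Definition vec {R : realType} {s : nat} (sig : FZ2 s -> FZ2 s -> Cx R) : FZ2 s * FZ2 s -> Cx R :=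
  fun p => sig p.1 p.2.

Lemma natC_neq0 (R : realType) (s : nat) : (0 < s)%N -> (s%:R : Cx R) != 0.
Proof.
move=> s0; apply/eqP => h; have := cnorm_nat R s.
rewrite h /cnorm real_closed.complex.ComplexField.Normc.normc0 => /eqP.
rewrite eq_sym pnatr_eq0 => /eqP hs0; by rewrite hs0 in s0.
Qed.

Lemma vec_Omega (R : realType) (s : nat) (sig : FZ2 s -> FZ2 s -> Cx R) : (0 < s)%N ->
  vec (Omega sig) = Omegabar (vec sig).
Proof.
move=> s0; apply: funext => -[x y].
rewrite /vec /Omega /Omegabar /lamlam /=.
have -> : \sum_(i < s) (PpL i (PpR i sig) x y + PmL i (PmR i sig) x y) =
   \sum_(i < s) (2^-1 * sig x y + 2^-1 * sig (gmul i x) (gmul i y)).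
  apply: eq_bigr => i _; by rewrite /PpL /PpR /PmL /PmR /lamL /lamR /=; field.
rewrite big_split /= -mulr_sumr -mulr_sumr sumr_const card_ord -mulr_natr.
by field; apply: natC_neq0.
Qed.

Lemma trsq_vec (R : realType) (s : nat) (sig : FZ2 s -> FZ2 s -> Cx R) :
  trsq sig = l2norm2 (vec sig).
Proof. by []. Qed.
Theorem mainTheorem5 (R : realType) (s : nat) (hs : (1 <= s)%N) :
  (opnorm (@Omegabar R s) <= (2^-1 + (Num.sqrt (s%:R : R))^-1)%:E)%E /\
  ((5 <= s)%N ->
   let mu := opnorm (@Omegabar R s) in
   (mu < 1)%E /\
   forall (sig : FZ2 s -> FZ2 s -> Cx R) (N : nat), density sig ->
     (trsq (iter N (@Omega R s) sig)
        <= (fine mu ^+ (2 * N))%:E * trsq sig)%E /\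
     ((fine mu ^+ (2 * N))%:E * trsq sig <= (fine mu ^+ (2 * N))%:E)%E).
Proof.
have s0 : (0 < s)%N by [].
have hle := opnorm_le R s s0.
split; first exact: hle.
move=> s5 mu.
set r := Num.sqrt (s%:R : R).
have r0 : (0 <= r)%R by exact: sqrtr_ge0.
have sr : (s%:R = r ^+ 2)%R by rewrite sqr_sqrtr // ler0n.
have s5R : (5 <= s%:R :> R)%R by rewrite ler_nat.
have r2 : (2 < r)%R by nra.
have c1 : (2^-1 + r^-1 < 1)%R.
  have : (r^-1 < 2^-1)%R by rewrite ltf_pV2 ?posrE //; lra.
  lra.
have mu0 : (0 <= mu)%E.
  apply: (le_trans (l2norm_ge0 R s (Omegabar (fun _ => 0)))).
  apply: ereal_sup_ubound; exists (fun _ => 0) => //.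
  rewrite /= /l2norm2 esum1 // => p _.
  by rewrite /cnorm real_closed.complex.ComplexField.Normc.normc0 expr0n.
have muc : (mu <= (2^-1 + r^-1)%:E)%E by exact: hle.
have mufin : mu = (fine mu)%:E.
  by move: mu0 muc; case: mu.
set m := fine mu in mufin *.
have m0 : (0 <= m)%R by rewrite -lee_fin -mufin.
split.
  by rewrite mufin lte_fin; apply: le_lt_trans c1; rewrite -lee_fin -mufin.
move=> sig N D.
have t1 := trsq_le1 _ _ _ D.
have t0 : (0 <= trsq sig)%E by rewrite trsq_vec l2norm2_ge0.
have tfin : trsq sig = (fine (trsq sig))%:E by move: t0 t1; case: (trsq sig).
set t := fine (trsq sig) in tfin *.
have tt0 : (0 <= t)%R by rewrite -lee_fin -tfin.
have tt1 : (t <= 1)%R by rewrite -lee_fin -tfin.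
have IT : forall n, (trsq (iter n (@Omega R s) sig) <= (m ^+ (2 * n) * t)%:E)%E.
  elim=> [|n IH]; first by rewrite mul1r tfin.
  set tau := iter n (@Omega R s) sig in IH *.
  have u0 : (0 <= trsq tau)%E by rewrite trsq_vec l2norm2_ge0.
  have ufin : trsq tau = (fine (trsq tau))%:E.
    by move: u0 IH; case: (trsq tau).
  have := homog _ _ _ _ (vec tau) s0 m0 mufin ufin.
  rewrite -vec_Omega // -trsq_vec /= => h.
  apply: (le_trans h); rewrite lee_fin mulnS exprD.
  rewrite -mulrA ler_wpM2l ?sqr_ge0 // -lee_fin -ufin //.
split.
  by rewrite tfin -EFinM; exact: IT.
rewrite tfin -EFinM lee_fin -[X in (_ <= X)%R]mulr1 ler_wpM2l //.
by rewrite exprn_ge0.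
Qed.
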